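(* Let $A(y)=A_1(y)+A_2(y)+A_3(y)+A_4(y)$, $y\in\mathbb R$, where $$A_1(y)=-\frac1{2\sqrt{2\pi}}\int_0^\infty e^{-2(t-y)^2}\,\mathrm{erfc}\,t\,dt,\qquad A_2(y)=\frac1{\sqrt{2\pi}}\int_0^\infty e^{-2(t-y)^2}\,t\Big(\frac{e^{-t^2}}{\sqrt\pi}-t\,\mathrm{erfc}\,t\Big)dt,$$ $$A_3(y)=\frac14\big(1+\mathrm{erf}(\sqrt2 y)\big)\Big(-\frac{y e^{-2y^2}}{\sqrt{2\pi}}+\Big(\frac14+y^2\Big)\big(1-\mathrm{erf}(\sqrt2 y)\big)\Big),$$ $$A_4(y)=-\frac1{\sqrt{2\pi}}\int_0^\infty dt_1\int_0^{t_1}dt_2\,\frac1{t_1-t_2}\Big(e^{-2(t_1-y)^2}\big(\mathrm{erf}(t_1-t_2)+\mathrm{erf}(\sqrt2(t_2-y))\big)+e^{-2(t_2-y)^2}\big(\mathrm{erf}(t_1-t_2)-\mathrm{erf}(\sqrt2(t_1-y))\big)\Big).$$ Then, as $y\to-\infty$, $$A(y)\sim\frac{|y|\,e^{-2y^2}}{2(2\pi)^{1/2}}.$$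
   Context: $A(y)$ is the function such that the edge-scaled density of the soft-disk two-dimensional one-component plasma satisfies $\rho^{\rm edge}_{(1)}(y;\Gamma)=\rho^{\rm edge}_{(1)}(y;2)-\frac{\Gamma-2}{\pi}A(y)+\mathcal O((\Gamma-2)^2)$. $\mathrm{erf}$ is the error function and $\mathrm{erfc}=1-\mathrm{erf}$. *)

(* Defs.v *)
From Stdlib Require Import Reals.
From Coquelicot Require Import Coquelicot.
Open Scope R_scope.

Definition erf (x : R) : R :=
  2 / sqrt PI * RInt (fun s => exp (- s ^ 2)) 0 x.
Definition erfc (x : R) : R := 1 - erf x.

Definition int0inf (f : R -> R) : R :=
  RInt_gen f (at_point 0) (Rbar_locally p_infty).

Definition A1 (y : R) : R :=
  - (1 / (2 * sqrt (2 * PI))) *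
    int0inf (fun t => exp (- 2 * (t - y) ^ 2) * erfc t).

Definition A2 (y : R) : R :=
  (1 / sqrt (2 * PI)) *
    int0inf (fun t => exp (- 2 * (t - y) ^ 2) * t *
                      (exp (- t ^ 2) / sqrt PI - t * erfc t)).

Definition A3 (y : R) : R :=
  / 4 * (1 + erf (sqrt 2 * y)) *
    (- (y * exp (- 2 * y ^ 2)) / sqrt (2 * PI)
     + (/ 4 + y ^ 2) * (1 - erf (sqrt 2 * y))).

(* integrand of A4; at t2 = t1 the numerator vanishes *)
Definition A4_integrand (y t1 t2 : R) : R :=
  / (t1 - t2) *
  (exp (- 2 * (t1 - y) ^ 2) * (erf (t1 - t2) + erf (sqrt 2 * (t2 - y)))
   + exp (- 2 * (t2 - y) ^ 2) * (erf (t1 - t2) - erf (sqrt 2 * (t1 - y)))).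

Definition A4 (y : R) : R :=
  - (1 / sqrt (2 * PI)) *
    int0inf (fun t1 => RInt (fun t2 => A4_integrand y t1 t2) 0 t1).

Definition A (y : R) : R := A1 y + A2 y + A3 y + A4 y.

(* Main.v *)
Require Import Defs.
From Stdlib Require Import Reals Lra Psatz.
From Coquelicot Require Import Coquelicot.
Open Scope R_scope.

Lemma exp_int_ab (C k a b : R) : 0 < k ->
  is_RInt (fun t => C * exp (- k * t)) a b (C / k * exp (- k * a) - C / k * exp (- k * b)).
Proof.
  intros Hk.
  replace (C / k * exp (- k * a) - C / k * exp (- k * b)) with
    (minus ((fun t => - (C / k) * exp (- k * t)) b) ((fun t => - (C / k) * exp (- k * t)) a))
    by (unfold minus, plus, opp; simpl; ring).
  apply (@is_RInt_derive R_CompleteNormedModule (fun t => - (C / k) * exp (- k * t)) (fun t => C * exp (- k * t))).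
  - intros x _. auto_derive; auto. field. lra.
  - intros x _. apply (@ex_derive_continuous R_AbsRing R_NormedModule (fun t => C * exp (- k * t))). auto_derive. auto.
Qed.

Lemma bound_ab (f : R -> R) (C k a b : R) : a <= b -> 0 < k -> ex_RInt f a b ->
  (forall t, a <= t <= b -> Rabs (f t) <= C * exp (- k * t)) ->
  Rabs (RInt f a b) <= C / k * exp (- k * a).
Proof.
  intros Hab Hk Hex Hb.
  assert (HC : 0 <= C).
  { assert (H0 := Hb a (conj (Rle_refl a) Hab)).
    assert (H1 := Rabs_pos (f a)). assert (H2 := exp_pos (- k * a)).
    destruct (Rle_lt_dec 0 C); auto. nra. }
  assert (H := norm_RInt_le f (fun t => C * exp (- k * t)) a b _ _ Hab Hb (RInt_correct _ _ _ Hex) (exp_int_ab C k a b Hk)).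
  simpl in H. unfold norm in H; simpl in H. unfold abs in H; simpl in H.
  assert (0 <= C / k * exp (- k * b)).
  { apply Rmult_le_pos. apply Rmult_le_pos; auto. left; apply Rinv_0_lt_compat; auto. left; apply exp_pos. }
  lra.
Qed.

Lemma ex_RInt_cont (f : R -> R) a b : (forall z, Rmin a b <= z <= Rmax a b -> continuous f z) -> ex_RInt f a b.
Proof. exact (@ex_RInt_continuous R_CompleteNormedModule f a b). Qed.

Lemma RInt_correct_R (f : R -> R) a b : ex_RInt f a b -> is_RInt f a b (RInt f a b).
Proof. exact (@RInt_correct R_CompleteNormedModule f a b). Qed.

Lemma cont_der (f : R -> R) x : ex_derive f x -> continuous f x.
Proof. exact (@ex_derive_continuous R_AbsRing R_NormedModule f x). Qed.


Lemma ball_R (x y e : R) : Rabs (y - x) < e -> ball x e y.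
Proof. intros H. unfold ball; simpl. unfold AbsRing_ball, abs, minus, plus, opp; simpl. exact H. Qed.

Lemma bound_inf (f : R -> R) (C k : R) : 0 < k ->
  (forall t, 0 <= t -> continuous f t) ->
  (forall t, 0 <= t -> Rabs (f t) <= C * exp (- k * t)) ->
  Rabs (int0inf f) <= C / k.
Proof.
  intros Hk Hc Hb.
  assert (Hex : forall u v, 0 <= u -> 0 <= v -> ex_RInt f u v).
  { intros u v Hu Hv. apply ex_RInt_cont. intros z Hz. apply Hc.
    destruct Hz as [Hz _]. eapply Rle_trans; [|exact Hz]. apply Rmin_glb; auto. }
  assert (HC : 0 <= C).
  { assert (H0 := Hb 0 (Rle_refl 0)).
    assert (H1 := Rabs_pos (f 0)). assert (H2 := exp_pos (- k * 0)).
    destruct (Rle_lt_dec 0 C); auto. nra. }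
  set (G := fun b => RInt f 0 b).
  assert (Hd : forall u v, 0 <= u <= v -> Rabs (G v - G u) <= C / k * exp (- k * u)).
  { intros u v [Hu Huv]. unfold G.
    rewrite <- (RInt_Chasles f 0 u v) by (apply Hex; lra).
    unfold plus; simpl. change (Rabs (RInt f 0 u + RInt f u v - RInt f 0 u) <= C / k * exp (- k * u)).
    assert (Hr : forall a c : R, a + c - a = c) by (intros; ring). rewrite Hr.
    apply bound_ab. lra. lra. apply Hex; lra. intros t Ht; apply Hb; lra. }
  assert (HG : exists L, filterlim G (Rbar_locally p_infty) (locally L)).
  { apply (filterlim_locally_cauchy (F := Rbar_locally p_infty)).
    intros eps.
    set (M := 2 * C / (k * k * eps) + 1).
    assert (HM : 0 < M).
    { unfold M. assert (0 <= 2 * C / (k * k * eps)).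
      { unfold Rdiv; apply Rmult_le_pos; [lra|]. left; apply Rinv_0_lt_compat.
        assert (0 < eps) by apply cond_pos. assert (0 < k * k) by nra. nra. }
      lra. }
    assert (HeM : C / k * exp (- k * M) < eps / 2).
    { assert (He := exp_ineq1_le (k * M)).
      assert (Hp : 0 < exp (k * M)) by apply exp_pos.
      assert (Heps : 0 < eps) by apply cond_pos.
      replace (exp (- k * M)) with (/ exp (k * M)).
      2:{ rewrite <- exp_Ropp. f_equal. ring. }
      unfold M in *.
      apply (Rmult_lt_reg_r (exp (k * (2 * C / (k * k * eps) + 1)))); auto.
      replace (C / k * / exp (k * (2 * C / (k * k * eps) + 1)) * exp (k * (2 * C / (k * k * eps) + 1)))
        with (C / k) by (field; split; lra).
      apply Rlt_le_trans with (eps / 2 * (1 + k * (2 * C / (k * k * eps) + 1))).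
      2:{ apply Rmult_le_compat_l; lra. }
      replace (eps / 2 * (1 + k * (2 * C / (k * k * eps) + 1))) with (C / k + eps / 2 + eps * k / 2)
        by (field; split; lra).
      assert (0 < eps * k) by nra.
      lra. }
    exists (fun x => M < x). split.
    - exists M. auto.
    - intros u v Hu Hv. apply ball_R.
      assert (Hmono : forall w, M <= w -> C / k * exp (- k * w) <= C / k * exp (- k * M)).
      { intros w Hw. apply Rmult_le_compat_l.
        apply Rmult_le_pos; auto; left; apply Rinv_0_lt_compat; auto.
        destruct (Req_dec w M). subst; lra. left; apply exp_increasing. nra. }
      destruct (Rle_lt_dec u v).
      + assert (H1 := Hd u v ltac:(lra)). assert (H2 := Hmono u ltac:(lra)).
        assert (0 < eps) by apply cond_pos. lra.
      + assert (H1 := Hd v u ltac:(lra)). assert (H2 := Hmono v ltac:(lra)).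
        assert (0 < eps) by apply cond_pos. rewrite Rabs_minus_sym. lra. }
  destruct HG as [L HL].
  assert (Hgen : is_RInt_gen f (at_point 0) (Rbar_locally p_infty) L).
  { unfold is_RInt_gen.
    apply (filterlimi_lim_ext_loc (fun ab => RInt f (fst ab) (snd ab))).
    - exists (fun a => a = 0) (fun b => 0 < b).
      + unfold at_point. reflexivity.
      + exists 0. auto.
      + intros x y Hx Hy. simpl. subst. apply RInt_correct_R. apply Hex; lra.
    - apply filterlim_ext_loc with (f := fun ab : R * R => G (snd ab)).
      + exists (fun a => a = 0) (fun b => True).
        * reflexivity.
        * exists 0; auto.
        * intros x y Hx _; simpl. subst. reflexivity.
      + eapply filterlim_comp. apply filterlim_snd. exact HL. }
  unfold int0inf. rewrite (is_RInt_gen_unique _ _ Hgen).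
  assert (HGb : forall b, 0 <= b -> Rabs (G b) <= C / k).
  { intros b Hb0. assert (H := Hd 0 b ltac:(lra)).
    unfold G in H at 2. rewrite RInt_point in H. unfold zero in H; simpl in H.
    replace (- k * 0) with 0 in H by ring. rewrite exp_0, Rmult_1_r, Rminus_0_r in H. exact H. }
  apply Rabs_le. split.
  - apply (filterlim_le (F := Rbar_locally p_infty) (fun _ => - (C / k)) G (Finite (- (C/k))) (Finite L)).
    + exists 0. intros x Hx. assert (H := HGb x ltac:(lra)). apply Rabs_le_between in H; lra.
    + apply filterlim_const.
    + exact HL.
  - apply (filterlim_le (F := Rbar_locally p_infty) G (fun _ => C / k) (Finite L) (Finite (C/k))).
    + exists 0. intros x Hx. assert (H := HGb x ltac:(lra)). apply Rabs_le_between in H; lra.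
    + exact HL.
    + apply filterlim_const.
Qed.

Lemma RInt_scal_R (f : R -> R) a b l : ex_RInt f a b -> RInt (fun x => l * f x) a b = l * RInt f a b.
Proof. intros H. exact (@RInt_scal R_CompleteNormedModule f a b l H). Qed.

Lemma RInt_comp_lin_R (f : R -> R) u v a b : ex_RInt f (u * a + v) (u * b + v) ->
  RInt (fun y => u * f (u * y + v)) a b = RInt f (u * a + v) (u * b + v).
Proof. intros H. exact (@RInt_comp_lin R_CompleteNormedModule f u v a b H). Qed.

Lemma RInt_Chasles_R (f : R -> R) a b c : ex_RInt f a b -> ex_RInt f b c -> RInt f a b + RInt f b c = RInt f a c.
Proof. intros H1 H2. exact (@RInt_Chasles R_CompleteNormedModule f a b c H1 H2). Qed.

Lemma RInt_ext_R (f g : R -> R) a b : (forall x, Rmin a b < x < Rmax a b -> f x = g x) -> RInt f a b = RInt g a b.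
Proof. intros H. exact (@RInt_ext R_CompleteNormedModule f g a b H). Qed.

Lemma RInt_point_R (f : R -> R) a : RInt f a a = 0.
Proof. exact (@RInt_point R_CompleteNormedModule a f). Qed.

Ltac req := match goal with |- @eq _ ?a ?b => change (@eq R a b) end.

Ltac nzu u := let H := fresh in intro H;
  assert (0 < u^2) by (apply pow_lt; lra); assert (0 < u^3) by (apply pow_lt; lra);
  assert (0 < u^4) by (apply pow_lt; lra); simpl in *; nra.

Lemma RInt_minus_R (f g : R -> R) a b : ex_RInt f a b -> ex_RInt g a b ->
  RInt (fun x => f x - g x) a b = RInt f a b - RInt g a b.
Proof. intros H1 H2. exact (@RInt_minus R_CompleteNormedModule f g a b H1 H2). Qed.

Lemma abs_RInt_le_abs (f : R -> R) a b M : ex_RInt f a b ->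
  (forall x, Rmin a b <= x <= Rmax a b -> Rabs (f x) <= M) -> Rabs (RInt f a b) <= Rabs (b - a) * M.
Proof.
  intros He Hb. apply (@norm_RInt_le_const_abs R_NormedModule f a b (RInt f a b) M).
  - exact Hb.
  - apply RInt_correct_R. exact He.
Qed.

Definition gam (s : R) : R := exp (- s ^ 2).
Definition gi (x : R) : R := RInt gam 0 x.

Lemma erf_gi x : erf x = 2 / sqrt PI * gi x.
Proof. reflexivity. Qed.

Lemma gam_cont x : continuous gam x.
Proof. apply cont_der. unfold gam. auto_derive. auto. Qed.

Lemma gam_ex a b : ex_RInt gam a b.
Proof. apply ex_RInt_cont. intros; apply gam_cont. Qed.

Lemma gi_derive x : is_derive gi x (gam x).
Proof.
  apply (is_derive_RInt gam gi 0 x).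
  - apply filter_forall. intros b. apply RInt_correct_R. apply gam_ex.
  - apply gam_cont.
Qed.

Lemma gi_ex_derive x : ex_derive gi x.
Proof. exists (gam x). apply gi_derive. Qed.

Lemma gi_cont x : continuous gi x.
Proof. apply cont_der. apply gi_ex_derive. Qed.

Lemma gi_diff a b : gi b - gi a = RInt gam a b.
Proof.
  unfold gi. rewrite <- (RInt_Chasles_R gam 0 a b) by apply gam_ex. ring.
Qed.

Lemma gi_mono a b : a <= b -> gi a <= gi b.
Proof.
  intros H. assert (0 <= RInt gam a b).
  { apply RInt_ge_0; auto. apply gam_ex. intros; unfold gam; left; apply exp_pos. }
  rewrite <- gi_diff in H0. lra.
Qed.

Lemma gi_0 : gi 0 = 0.
Proof. unfold gi. apply RInt_point_R. Qed.

Lemma gi_odd x : gi (- x) = - gi x.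
Proof.
  unfold gi.
  assert (H := RInt_comp_lin_R gam (-1) 0 0 x (gam_ex _ _)).
  replace (-1 * 0 + 0) with 0 in H by ring.
  replace (-1 * x + 0) with (- x) in H by ring.
  rewrite <- H.
  rewrite (RInt_ext_R _ (fun y => (-1) * (gam y))).
  2:{ intros y _. unfold gam. f_equal. f_equal. f_equal. ring. }
  rewrite RInt_scal_R by apply gam_ex. ring.
Qed.

Lemma gi_tail s X : 1 <= s <= X -> 0 <= gi X - gi s <= exp (- s).
Proof.
  intros [H1 H2]. split.
  - assert (H := gi_mono s X H2). lra.
  - rewrite gi_diff.
    assert (H := bound_ab gam 1 1 s X H2 Rlt_0_1 (gam_ex _ _)).
    assert (Hb : forall t : R, s <= t <= X -> Rabs (gam t) <= 1 * exp (- (1) * t)).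
    { intros t Ht. unfold gam. rewrite Rabs_pos_eq by (left; apply exp_pos).
      rewrite Rmult_1_l. destruct (Req_dec (-t^2) (-(1)*t)).
      rewrite H0; lra. left; apply exp_increasing. nra. }
    specialize (H Hb).
    apply Rabs_le_between in H.
    replace (1 / 1 * exp (- (1) * s)) with (exp (- s)) in H. lra.
    replace (- (1) * s) with (- s) by ring. field.
Qed.

Definition hf (u t : R) : R := exp (- (u ^ 2) * (1 + t ^ 2)) / (1 + t ^ 2).
Definition Hf (x : R) : R := RInt (fun t => hf x t) 0 1.
Definition dh (u v : R) : R := -2 * u * exp (- (u ^ 2) * (1 + v ^ 2)).

Lemma pos1t2 t : 0 < 1 + t ^ 2.
Proof. nra. Qed.

Lemma hf_derive u t : is_derive (fun z => hf z t) u (dh u t).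
Proof. unfold hf, dh. auto_derive. auto. simpl. field. nra. Qed.

Lemma cont_exp_pt x : continuity_pt exp x.
Proof. apply continuity_pt_filterlim. apply continuous_exp. Qed.

Lemma dh_cont x t : continuity_2d_pt dh x t.
Proof.
  apply continuity_2d_pt_ext with (f := fun u v => (-2 * u) * exp (-(u * u) * (1 + v * v))).
  { intros; unfold dh; simpl. repeat rewrite Rmult_1_r. reflexivity. }
  apply continuity_2d_pt_mult.
  - apply continuity_2d_pt_mult. apply continuity_2d_pt_const. apply continuity_2d_pt_id1.
  - apply (continuity_1d_2d_pt_comp exp (fun u v => - (u * u) * (1 + v * v))).
    apply cont_exp_pt.
    apply continuity_2d_pt_mult.
    + apply continuity_2d_pt_opp. apply continuity_2d_pt_mult; apply continuity_2d_pt_id1.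
    + apply continuity_2d_pt_plus. apply continuity_2d_pt_const.
      apply continuity_2d_pt_mult; apply continuity_2d_pt_id2.
Qed.

Lemma hf_ex x a b : ex_RInt (fun t => hf x t) a b.
Proof.
  apply ex_RInt_cont. intros z _. apply cont_der. unfold hf. auto_derive. nra.
Qed.

Lemma Hf_derive (x : R) : is_derive Hf x (- 2 * exp (- x ^ 2) * gi x).
Proof.
  unfold Hf.
  assert (H := is_derive_RInt_param (fun u t => hf u t) 0 1 x).
  assert (Hd : RInt (fun t => Derive (fun u => hf u t) x) 0 1 = - 2 * exp (- x ^ 2) * gi x).
  { rewrite (RInt_ext_R _ (fun t => (- 2 * exp (- x ^ 2)) * (x * gam (x * t + 0)))).
    2:{ intros t _. transitivity (dh x t). { exact (is_derive_unique _ _ _ (hf_derive x t)). } unfold dh, gam.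
        replace (- (x * t + 0) ^ 2) with (- (x ^ 2) * (1 + t ^ 2) + x ^ 2) by ring.
        rewrite exp_plus. replace (- x ^ 2) with (- (x^2)) by ring.
        assert (exp (- (x^2)) * exp (x^2) = 1).
        { rewrite <- exp_plus. replace (- (x^2) + x^2) with 0 by ring. apply exp_0. }
        transitivity (-2 * x * exp (- x ^ 2 * (1 + t ^ 2)) * (exp (- (x^2)) * exp (x^2))).
        rewrite H0; ring. ring. }
    rewrite RInt_scal_R.
    2:{ apply ex_RInt_cont. intros z _. apply cont_der. unfold gam. auto_derive. auto. }
    rewrite RInt_comp_lin_R by apply gam_ex.
    replace (x * 0 + 0) with 0 by ring. replace (x * 1 + 0) with x by ring. reflexivity. }
  rewrite <- Hd. apply H.
  - apply filter_forall. intros x0 t _. exists (dh x0 t). apply hf_derive.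
  - intros t _. apply continuity_2d_pt_ext with (f := dh).
    + intros u v. symmetry. apply is_derive_unique. apply hf_derive.
    + apply dh_cont.
  - apply filter_forall. intros y. apply hf_ex.
Qed.

Lemma Phi_derive (x : R) : is_derive (fun y => gi y * gi y + Hf y) x 0.
Proof.
  assert (H := is_derive_plus _ _ x _ _ (is_derive_mult gi gi x _ _ (gi_derive x) (gi_derive x) Rmult_comm) (Hf_derive x)).
  unfold plus, mult in H; simpl in H.
  replace 0 with (gam x * gi x + gi x * gam x + -2 * exp (- x ^ 2) * gi x).
  exact H. unfold gam. ring.
Qed.

Lemma Hf_0 : Hf 0 = PI / 4.
Proof.
  unfold Hf. rewrite (RInt_ext_R _ (fun t => / (1 + t ^ 2))).
  2:{ intros t _. unfold hf. replace (- (0 ^ 2) * (1 + t ^ 2)) with 0 by ring. rewrite exp_0. field.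
      assert (H := pos1t2 t). lra. }
  assert (H : is_RInt (fun t => / (1 + t ^ 2)) 0 1 (minus (atan 1) (atan 0))).
  { apply (@is_RInt_derive R_CompleteNormedModule atan).
    - intros x _. auto_derive. auto. field. nra.
    - intros x _. apply cont_der. auto_derive. nra. }
  rewrite (is_RInt_unique _ _ _ _ H). unfold minus, plus, opp; simpl.
  rewrite atan_1, atan_0. ring.
Qed.

Lemma gi_sq x : gi x * gi x = PI / 4 - Hf x.
Proof.
  set (Phi := fun y => gi y * gi y + Hf y).
  assert (H : is_RInt (fun _ => 0) 0 x (minus (Phi x) (Phi 0))).
  { apply (@is_RInt_derive R_CompleteNormedModule Phi).
    - intros y _. apply Phi_derive.
    - intros y _. apply continuous_const. }
  assert (H2 := is_RInt_unique _ _ _ _ H).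
  rewrite RInt_const in H2. unfold scal, minus, plus, opp in H2; simpl in H2. unfold mult in H2; simpl in H2.
  unfold Phi in H2. rewrite gi_0, Hf_0 in H2. lra.
Qed.

Lemma Hf_bounds x : 0 <= Hf x <= exp (- x ^ 2).
Proof.
  unfold Hf. split.
  - apply RInt_ge_0. lra. apply hf_ex. intros t _. unfold hf. left.
    apply Rdiv_lt_0_compat. apply exp_pos. apply pos1t2.
  - replace (exp (- x ^ 2)) with (RInt (fun _ => exp (- x ^ 2)) 0 1).
    2:{ rewrite RInt_const. unfold scal; simpl; unfold mult; simpl. ring. }
    apply RInt_le. lra. apply hf_ex. apply ex_RInt_const.
    intros t Ht. unfold hf.
    assert (H1 := pos1t2 t).
    assert (exp (- (x ^ 2) * (1 + t ^ 2)) <= exp (- x ^ 2)).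
    { destruct (Req_dec (- (x ^ 2) * (1 + t ^ 2)) (- x ^ 2)). rewrite H; lra.
      left; apply exp_increasing. assert (0 <= x^2 * t^2) by (apply Rmult_le_pos; apply pow2_ge_0). nra. }
    apply Rle_trans with (exp (- (x ^ 2) * (1 + t ^ 2))).
    + unfold Rdiv. rewrite <- (Rmult_1_r (exp (- (x ^ 2) * (1 + t ^ 2)))) at 2.
      apply Rmult_le_compat_l. left; apply exp_pos.
      rewrite <- Rinv_1. apply Rinv_le_contravar. lra. assert (0 <= t^2) by apply pow2_ge_0. lra.
    + exact H.
Qed.

Lemma sqrtPI_pos : 0 < sqrt PI.
Proof. apply sqrt_lt_R0. apply PI_RGT_0. Qed.

Lemma sqrtPI_sq : sqrt PI * sqrt PI = PI.
Proof. apply sqrt_sqrt. left; apply PI_RGT_0. Qed.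

Lemma gi_nonneg x : 0 <= x -> 0 <= gi x.
Proof. intros H. rewrite <- gi_0. apply gi_mono; auto. Qed.

Lemma gi_le x : gi x <= sqrt PI / 2.
Proof.
  destruct (Rle_lt_dec 0 x).
  - assert (H := gi_sq x). assert (H2 := Hf_bounds x).
    assert (H3 := gi_nonneg x r). assert (H4 := sqrtPI_sq). assert (H5 := sqrtPI_pos).
    nra.
  - assert (gi x <= 0). { rewrite <- gi_0. apply gi_mono. lra. }
    assert (H5 := sqrtPI_pos). lra.
Qed.

Lemma gi_gauss_bound x : 0 <= x -> 0 <= sqrt PI / 2 - gi x <= 2 / sqrt PI * exp (- x ^ 2).
Proof.
  intros Hx. split. assert (H := gi_le x). lra.
  assert (H := gi_sq x). assert (H2 := Hf_bounds x).
  assert (H3 := gi_nonneg x Hx). assert (H4 := sqrtPI_sq). assert (H5 := sqrtPI_pos).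
  assert (E : sqrt PI / 2 - gi x = Hf x / (sqrt PI / 2 + gi x)).
  { field_simplify_eq. nra. lra. }
  rewrite E. unfold Rdiv. rewrite (Rmult_comm 2).
  apply Rle_trans with (Hf x * / (sqrt PI / 2)).
  - apply Rmult_le_compat_l. lra. apply Rinv_le_contravar; lra.
  - replace (/ sqrt PI * 2 * exp (- x ^ 2)) with (exp (- x ^ 2) * / (sqrt PI / 2)) by (field; lra).
    apply Rmult_le_compat_r. left; apply Rinv_0_lt_compat; lra. lra.
Qed.

Definition T (x : R) : R := sqrt PI / 2 - gi x.

Lemma le_eps_exp (a b K x : R) : 0 <= K ->
  (forall X, x <= X -> a <= b + K * exp (- X ^ 2)) -> a <= b.
Proof.
  intros HK H. destruct (Rle_lt_dec a b) as [|Hab]; auto.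
  exfalso. set (d := a - b). assert (Hd : 0 < d) by (unfold d; lra).
  set (X := Rabs x + K / d + 1).
  assert (HKd : 0 <= K / d) by (apply Rmult_le_pos; auto; left; apply Rinv_0_lt_compat; auto).
  assert (HX1 : 1 <= X) by (unfold X; assert (0 <= Rabs x) by apply Rabs_pos; lra).
  assert (HxX : x <= X) by (unfold X; assert (x <= Rabs x) by apply RRle_abs; lra).
  specialize (H X HxX).
  assert (He := exp_ineq1_le (X ^ 2)).
  assert (Hp : 0 < exp (X ^ 2)) by apply exp_pos.
  assert (E : K * exp (- X ^ 2) * exp (X ^ 2) = K).
  { rewrite Rmult_assoc, <- exp_plus. replace (- X ^ 2 + X ^ 2) with 0 by ring. rewrite exp_0. ring. }
  assert (HX2 : X <= X ^ 2) by nra.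
  assert (K < d * exp (X ^ 2)).
  { apply Rlt_le_trans with (d * X).
    - unfold X. replace (d * (Rabs x + K / d + 1)) with (d * Rabs x + K + d) by (field; lra).
      assert (0 <= d * Rabs x) by (apply Rmult_le_pos; [lra | apply Rabs_pos]). lra.
    - apply Rmult_le_compat_l; lra. }
  assert (K * exp (- X ^ 2) < d).
  { apply (Rmult_lt_reg_r (exp (X ^ 2))); auto. rewrite E. lra. }
  unfold d in *. lra.
Qed.

Lemma psi1_derive u : 0 < u ->
  is_derive (fun v => - exp (- v ^ 2) / (2 * v)) u (exp (- u ^ 2) * (1 + / (2 * u ^ 2))).
Proof. intros Hu. auto_derive. nzu u. simpl; req. field. nzu u. Qed.

Lemma psi2_derive u : 0 < u ->
  is_derive (fun v => - exp (- v ^ 2) * (/ (2 * v) - / (4 * v ^ 3))) u (exp (- u ^ 2) * (1 - 3 / (4 * u ^ 4))).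
Proof. intros Hu. auto_derive. repeat split; try (nzu u). simpl; req. field. repeat split; nzu u. Qed.

Lemma T_nonneg x : 0 <= T x.
Proof. unfold T. assert (H := gi_le x). lra. Qed.

Lemma T_gauss x : 0 <= x -> T x <= 2 / sqrt PI * exp (- x ^ 2).
Proof. intros H. apply gi_gauss_bound; auto. Qed.

Lemma mills_upper x : 0 < x -> T x <= exp (- x ^ 2) / (2 * x).
Proof.
  intros Hx.
  apply (le_eps_exp _ _ (2 / sqrt PI) x).
  { assert (H := sqrtPI_pos). apply Rmult_le_pos; [lra|left; apply Rinv_0_lt_compat; auto]. }
  intros X HX.
  assert (Hint : gi X - gi x <= exp (- x ^ 2) / (2 * x) - exp (- X ^ 2) / (2 * X)).
  { rewrite gi_diff.
    assert (HI : is_RInt (fun u => exp (- u ^ 2) * (1 + / (2 * u ^ 2))) x X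
                  (minus (- exp (- X ^ 2) / (2 * X)) (- exp (- x ^ 2) / (2 * x)))).
    { apply (@is_RInt_derive R_CompleteNormedModule (fun v => - exp (- v ^ 2) / (2 * v))).
      - intros u Hu. rewrite Rmin_left in Hu by lra. apply psi1_derive. lra.
      - intros u Hu. rewrite Rmin_left in Hu by lra. apply cont_der. auto_derive. repeat split; try (nzu u). }
    assert (E := is_RInt_unique _ _ _ _ HI).
    apply Rle_trans with (RInt (fun u => exp (- u ^ 2) * (1 + / (2 * u ^ 2))) x X).
    - apply RInt_le; auto. apply gam_ex. eexists; exact HI.
      intros u Hu. unfold gam. assert (0 < / (2 * u ^ 2)).
      { apply Rinv_0_lt_compat. nra. }
      assert (0 < exp (- u ^ 2)) by apply exp_pos. nra.
    - rewrite E. unfold minus, plus, opp; simpl. lra. }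
  assert (H1 := T_gauss X ltac:(lra)).
  assert (H2 : 0 <= exp (- X ^ 2) / (2 * X)).
  { apply Rmult_le_pos. left; apply exp_pos. left; apply Rinv_0_lt_compat; lra. }
  unfold T in *. lra.
Qed.

Lemma mills_lower x : 0 < x -> exp (- x ^ 2) * (/ (2 * x) - / (4 * x ^ 3)) <= T x.
Proof.
  intros Hx.
  apply Rle_trans with (T x + 0). 2: lra.
  apply (le_eps_exp _ _ (/ (2 * x)) x).
  { left; apply Rinv_0_lt_compat; lra. }
  intros X HX.
  assert (Hint : exp (- x ^ 2) * (/ (2 * x) - / (4 * x ^ 3)) - exp (- X ^ 2) * (/ (2 * X) - / (4 * X ^ 3)) <= gi X - gi x).
  { rewrite gi_diff.
    assert (HI : is_RInt (fun u => exp (- u ^ 2) * (1 - 3 / (4 * u ^ 4))) x X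
                  (minus (- exp (- X ^ 2) * (/ (2 * X) - / (4 * X ^ 3))) (- exp (- x ^ 2) * (/ (2 * x) - / (4 * x ^ 3))))).
    { apply (@is_RInt_derive R_CompleteNormedModule (fun v => - exp (- v ^ 2) * (/ (2 * v) - / (4 * v ^ 3)))).
      - intros u Hu. rewrite Rmin_left in Hu by lra. apply psi2_derive. lra.
      - intros u Hu. rewrite Rmin_left in Hu by lra. apply cont_der. auto_derive. repeat split; try (nzu u). }
    assert (E := is_RInt_unique _ _ _ _ HI).
    apply Rle_trans with (RInt (fun u => exp (- u ^ 2) * (1 - 3 / (4 * u ^ 4))) x X).
    { rewrite E. unfold minus, plus, opp; simpl. lra. }
    apply RInt_le; auto. eexists; exact HI. apply gam_ex.
    intros u Hu. unfold gam. assert (0 < 3 / (4 * u ^ 4)).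
    { apply Rdiv_lt_0_compat. lra. assert (0 < u ^ 4) by (apply pow_lt; lra). lra. }
    assert (0 < exp (- u ^ 2)) by apply exp_pos. nra. }
  assert (H1 := T_nonneg X).
  assert (H2 : exp (- X ^ 2) * (/ (2 * X) - / (4 * X ^ 3)) <= / (2 * x) * exp (- X ^ 2)).
  { rewrite Rmult_comm. apply Rmult_le_compat_r. left; apply exp_pos.
    assert (0 < / (4 * X ^ 3)) by (apply Rinv_0_lt_compat; assert (0 < X ^ 3) by (apply pow_lt; lra); lra).
    assert (/ (2 * X) <= / (2 * x)) by (apply Rinv_le_contravar; lra). lra. }
  unfold T in *. lra.
Qed.

Definition Dn (y : R) : R := Rabs y * exp (- 2 * y ^ 2) / (2 * sqrt (2 * PI)).

Lemma s2_facts : 1.4 < sqrt 2 /\ sqrt 2 * sqrt 2 = 2.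
Proof.
  split. 2: apply sqrt_sqrt; lra.
  apply Rsqr_incrst_0. rewrite Rsqr_sqrt by lra. unfold Rsqr; lra. lra. apply sqrt_pos.
Qed.

Lemma sp_facts : 1.7 < sqrt PI /\ sqrt PI * sqrt PI = PI.
Proof.
  split. 2: apply sqrtPI_sq.
  apply Rsqr_incrst_0. rewrite Rsqr_sqrt by (left; apply PI_RGT_0). unfold Rsqr.
  assert (H := PI2_3_2). lra. lra. apply sqrt_pos.
Qed.

Lemma s2p : sqrt (2 * PI) = sqrt 2 * sqrt PI.
Proof. apply sqrt_mult. lra. left; apply PI_RGT_0. Qed.

Lemma A3_ratio (y : R) : y <= -1 -> Rabs (A3 y / Dn y - 1) <= 2 / (- y).
Proof.
  intros Hy. set (Y := - y). assert (HY : 1 <= Y) by (unfold Y; lra).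
  destruct s2_facts as [Hs2 Hs2s]. destruct sp_facts as [Hsp Hsps].
  set (s2 := sqrt 2) in *. set (sp := sqrt PI) in *.
  set (x := s2 * Y).
  assert (Hx : 1.4 <= x) by (unfold x; nra).
  assert (Hx2 : x ^ 2 = 2 * Y ^ 2) by (unfold x; simpl; nra).
  set (E := exp (- x ^ 2)).
  assert (HE : 0 < E) by apply exp_pos.
  assert (HE1 : E <= 1).
  { unfold E. rewrite <- exp_0. destruct (Req_dec (- x^2) 0). rewrite H; lra. left; apply exp_increasing. nra. }
  assert (HEy : exp (- 2 * y ^ 2) = E).
  { unfold E. f_equal. rewrite Hx2. unfold Y. ring. }
  set (Tx := T x).
  assert (Herf : erf (s2 * y) = -1 + 2 / sp * Tx).
  { rewrite erf_gi. fold sp. replace (s2 * y) with (- x) by (unfold x, Y; ring).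
    rewrite gi_odd. unfold Tx, T. fold sp. field. lra. }
  assert (HM1 := mills_upper x ltac:(lra)). assert (HM2 := mills_lower x ltac:(lra)).
  fold Tx E in HM1, HM2.
  set (th := Tx * (2 * x) / E).
  assert (Hth1 : th <= 1).
  { unfold th. apply (Rmult_le_reg_r E); auto. unfold Rdiv. rewrite Rmult_assoc, Rinv_l by lra.
    apply (Rmult_le_reg_r (/ (2 * x))). apply Rinv_0_lt_compat; lra.
    replace (Tx * (2 * x) * 1 * / (2 * x)) with Tx by (field; lra). lra. }
  assert (Hth2 : 1 - / Y <= th).
  { unfold th. apply (Rmult_le_reg_r E); auto. unfold Rdiv. rewrite Rmult_assoc, Rinv_l by lra.
    apply Rle_trans with (E * (/ (2 * x) - / (4 * x ^ 3)) * (2 * x)).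
    - replace (E * (/ (2 * x) - / (4 * x ^ 3)) * (2 * x)) with (E * (1 - / (2 * x ^ 2))) by (field; lra).
      rewrite Rmult_comm. apply Rmult_le_compat_l; [lra|].
      rewrite Hx2. assert (/ (2 * (2 * Y ^ 2)) <= / Y).
      { apply Rinv_le_contravar. lra. nra. }
      lra.
    - rewrite Rmult_1_r. apply Rmult_le_compat_r; lra. }
  assert (HTx : 0 <= Tx <= E / (2 * x)).
  { split. apply T_nonneg. exact HM1. }
  assert (HD : Dn y = Y * E / (2 * (s2 * sp))).
  { unfold Dn. rewrite HEy, s2p. fold s2 sp. rewrite Rabs_left by lra. unfold Y. reflexivity. }
  assert (HA3 : A3 y = / 4 * (2 / sp * Tx) * (Y * E / (s2 * sp) + (/ 4 + Y ^ 2) * (2 - 2 / sp * Tx))).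
  { unfold A3. fold s2. rewrite Herf, HEy, s2p. fold s2 sp. unfold Y. field. lra. }
  set (Q := (Y * E / (s2 * sp) + (/ 4 + Y ^ 2) * (2 - 2 / sp * Tx)) / (2 * Y ^ 2)).
  assert (Hratio : A3 y / Dn y = th * Q).
  { rewrite HA3, HD. unfold th, Q, x. field. repeat split; nra. }
  assert (HQ1 : Q <= 1 + / (2 * Y)).
  { unfold Q. apply (Rmult_le_reg_r (2 * Y ^ 2)). nra.
    unfold Rdiv. rewrite Rmult_assoc, Rinv_l by nra. rewrite Rmult_1_r.
    assert (0 <= 2 / sp * Tx * (/ 4 + Y ^ 2)).
    { apply Rmult_le_pos. apply Rmult_le_pos. apply Rmult_le_pos. lra. left; apply Rinv_0_lt_compat; lra. lra. nra. }
    assert (Y * E * / (s2 * sp) <= Y / 2).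
    { apply Rle_trans with (Y * 1 * / 2). apply Rmult_le_compat. nra. left; apply Rinv_0_lt_compat; nra.
      apply Rmult_le_compat_l; lra. apply Rinv_le_contravar. lra. nra. lra. }
    replace ((1 + / (2 * Y)) * (2 * Y ^ 2)) with (2 * Y ^ 2 + Y) by (field; lra). nra. }
  assert (HQ2 : 1 - / Y <= Q).
  { unfold Q. apply (Rmult_le_reg_r (2 * Y ^ 2)). nra.
    unfold Rdiv. rewrite Rmult_assoc, Rinv_l by nra. rewrite Rmult_1_r.
    assert (0 <= Y * E * / (s2 * sp)).
    { apply Rmult_le_pos. nra. left; apply Rinv_0_lt_compat; nra. }
    assert (HT2 : Tx <= / (2 * x)).
    { apply Rle_trans with (E / (2 * x)). lra. unfold Rdiv. rewrite <- (Rmult_1_l (/ (2 * x))) at 2.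
      apply Rmult_le_compat_r. left; apply Rinv_0_lt_compat; lra. lra. }
    assert (HT3 : 2 * / sp * Tx * (/ 4 + Y ^ 2) <= Y).
    { apply Rle_trans with (2 * / sp * / (2 * x) * (/ 4 + Y ^ 2)).
      - apply Rmult_le_compat_r. nra. apply Rmult_le_compat_l.
        apply Rmult_le_pos. lra. left; apply Rinv_0_lt_compat; lra. exact HT2.
      - replace (2 * / sp * / (2 * x) * (/ 4 + Y ^ 2)) with ((/ 4 + Y ^ 2) / (sp * s2 * Y)) by (unfold x; field; repeat split; nra).
        assert (Hss : 2 <= sp * s2) by nra.
        assert (Hss2 : 0 < sp * s2 * Y) by nra.
        apply (Rmult_le_reg_r (sp * s2 * Y)). lra.
        unfold Rdiv; rewrite Rmult_assoc, Rinv_l by lra. nra. }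
    replace ((1 - / Y) * (2 * Y ^ 2)) with (2 * Y ^ 2 - 2 * Y) by (field; lra).
    unfold Rdiv in HT3. nra. }
  rewrite Hratio. apply Rabs_le. replace (2 / - y) with (2 * / Y) by (unfold Y; field; lra).
  assert (0 < / Y) by (apply Rinv_0_lt_compat; lra).
  assert (/ Y <= 1) by (rewrite <- Rinv_1; apply Rinv_le_contravar; lra).
  assert (/ (2 * Y) = / 2 * / Y) by (field; lra).
  split; nra.
Qed.

Lemma gam1_cont x : continuity_pt (fun x0 : R => exp (- (x0 * (x0 * 1)))) x.
Proof. apply continuity_pt_filterlim. apply (gam_cont x). Qed.

Lemma gam1_ex a b : ex_RInt (fun x : R => exp (- (x * (x * 1)))) a b.
Proof. apply (gam_ex a b). Qed.

Ltac gi_side := repeat match goal with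
  | |- _ /\ _ => split
  | |- True => exact I
  | |- ex_RInt _ _ _ => apply gam1_ex
  | |- locally _ _ => apply filter_forall; intros; apply gam1_cont
  | |- _ <> 0 => let H := fresh in intro H; nra
  end.

Lemma exp_split (y t : R) : exp (- 2 * (t - y) ^ 2) = exp (- 2 * y ^ 2) * exp (- (4 * - y) * t) * exp (- 2 * t ^ 2).
Proof. rewrite <- !exp_plus. f_equal. ring. Qed.

Lemma erfc_bounds t : 0 <= t -> 0 <= erfc t <= 1.
Proof.
  intros Ht. unfold erfc. rewrite erf_gi. assert (H1 := gi_le t). assert (H2 := gi_nonneg t Ht).
  destruct sp_facts as [Hsp _].
  split.
  - assert (2 / sqrt PI * gi t <= 1).
    { apply (Rmult_le_reg_r (sqrt PI)). lra. unfold Rdiv. rewrite Rmult_comm, <- !Rmult_assoc.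
      rewrite Rinv_r_simpl_m. lra. lra. }
    lra.
  - assert (0 <= 2 / sqrt PI * gi t).
    { apply Rmult_le_pos; auto. apply Rmult_le_pos. lra. left; apply Rinv_0_lt_compat; lra. }
    lra.
Qed.

Lemma exp_le_1 a : a <= 0 -> exp a <= 1.
Proof. intros H. rewrite <- exp_0. destruct (Req_dec a 0). subst; lra. left; apply exp_increasing; lra. Qed.

Lemma A1_bound y : y <= -1 -> Rabs (Defs.A1 y) <= exp (- 2 * y ^ 2).
Proof.
  intros Hy. unfold Defs.A1.
  assert (H := bound_inf (fun t => exp (- 2 * (t - y) ^ 2) * erfc t) (exp (- 2 * y ^ 2)) (4 * - y) ltac:(lra)).
  assert (Hb : Rabs (int0inf (fun t => exp (- 2 * (t - y) ^ 2) * erfc t)) <= exp (- 2 * y ^ 2) / (4 * - y)).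
  { apply H.
    - intros t _. apply cont_der. unfold erfc, erf. fold (gi t). auto_derive. gi_side.
    - intros t Ht. rewrite exp_split. destruct (erfc_bounds t Ht).
      rewrite Rabs_pos_eq.
      2:{ apply Rmult_le_pos; auto. left. apply Rmult_lt_0_compat. apply Rmult_lt_0_compat; apply exp_pos. apply exp_pos. }
      assert (exp (- 2 * t ^ 2) <= 1) by (apply exp_le_1; nra).
      assert (0 < exp (- 2 * y ^ 2) * exp (- (4 * - y) * t)) by (apply Rmult_lt_0_compat; apply exp_pos).
      assert (0 < exp (- 2 * t ^ 2)) by apply exp_pos.
      assert (exp (- 2 * t ^ 2) * erfc t <= 1) by nra.
      nra. }
  assert (He := exp_pos (- 2 * y ^ 2)).
  destruct s2_facts as [Hs2 _]. destruct sp_facts as [Hsp _].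
  assert (Hsq : 2 <= sqrt (2 * PI)) by (rewrite s2p; nra).
  rewrite Rabs_mult. rewrite Rabs_Ropp. rewrite Rabs_pos_eq.
  2:{ apply Rmult_le_pos. lra. left; apply Rinv_0_lt_compat; lra. }
  apply Rle_trans with (1 / (2 * sqrt (2 * PI)) * (exp (- 2 * y ^ 2) / (4 * - y))).
  apply Rmult_le_compat_l. apply Rmult_le_pos. lra. left; apply Rinv_0_lt_compat; lra. exact Hb.
  assert (1 / (2 * sqrt (2 * PI)) <= 1).
  { unfold Rdiv. rewrite Rmult_1_l. rewrite <- Rinv_1. apply Rinv_le_contravar; lra. }
  assert (exp (- 2 * y ^ 2) / (4 * - y) <= exp (- 2 * y ^ 2)).
  { unfold Rdiv. rewrite <- (Rmult_1_r (exp (- 2 * y ^ 2))) at 2. apply Rmult_le_compat_l. lra.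
    rewrite <- Rinv_1. apply Rinv_le_contravar; lra. }
  assert (0 <= exp (- 2 * y ^ 2) / (4 * - y)).
  { apply Rmult_le_pos. lra. left; apply Rinv_0_lt_compat; lra. }
  nra.
Qed.

Lemma poly_exp_bound t : 0 <= t -> exp (- 2 * t ^ 2) * (t + t * t) <= 2.
Proof.
  intros Ht. assert (H := exp_ineq1_le (2 * t ^ 2)).
  assert (E : exp (- 2 * t ^ 2) * exp (2 * t ^ 2) = 1).
  { rewrite <- exp_plus. replace (- 2 * t ^ 2 + 2 * t ^ 2) with 0 by ring. apply exp_0. }
  assert (Hp := exp_pos (2 * t ^ 2)). assert (Hq := exp_pos (- 2 * t ^ 2)).
  assert (t + t * t <= 2 * exp (2 * t ^ 2)) by nra.
  nra.
Qed.

Lemma A2_bound y : y <= -1 -> Rabs (A2 y) <= exp (- 2 * y ^ 2).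
Proof.
  intros Hy. unfold A2.
  destruct s2_facts as [Hs2 _]. destruct sp_facts as [Hsp _].
  assert (H := bound_inf (fun t => exp (- 2 * (t - y) ^ 2) * t * (exp (- t ^ 2) / sqrt PI - t * erfc t)) (2 * exp (- 2 * y ^ 2)) (4 * - y) ltac:(lra)).
  assert (Hb : Rabs (int0inf (fun t => exp (- 2 * (t - y) ^ 2) * t * (exp (- t ^ 2) / sqrt PI - t * erfc t))) <= 2 * exp (- 2 * y ^ 2) / (4 * - y)).
  { apply H.
    - intros t _. apply cont_der. unfold erfc, erf. fold (gi t). auto_derive. gi_side.
    - intros t Ht. rewrite exp_split. destruct (erfc_bounds t Ht).
      assert (HH1 : Rabs (exp (- t ^ 2) / sqrt PI - t * erfc t) <= 1 + t).
      { assert (0 < exp (- t ^ 2) / sqrt PI <= 1).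
        { split. apply Rdiv_lt_0_compat. apply exp_pos. lra.
          apply (Rmult_le_reg_r (sqrt PI)). lra. unfold Rdiv. rewrite Rmult_assoc, Rinv_l by lra.
          assert (exp (- t ^ 2) <= 1) by (apply exp_le_1; nra). lra. }
        apply Rabs_le. nra. }
      assert (HH2 := poly_exp_bound t Ht).
      assert (0 < exp (- 2 * y ^ 2) * exp (- (4 * - y) * t)) by (apply Rmult_lt_0_compat; apply exp_pos).
      assert (0 < exp (- 2 * t ^ 2)) by apply exp_pos.
      rewrite !Rabs_mult. rewrite (Rabs_pos_eq (exp (- 2 * y ^ 2))) by (left; apply exp_pos).
      rewrite (Rabs_pos_eq (exp (- (4 * - y) * t))) by (left; apply exp_pos).
      rewrite (Rabs_pos_eq (exp (- 2 * t ^ 2))) by (left; apply exp_pos).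
      rewrite (Rabs_pos_eq t) by lra.
      assert (0 <= Rabs (exp (- t ^ 2) / sqrt PI - t * erfc t)) by apply Rabs_pos.
      assert (exp (- 2 * t ^ 2) * t * Rabs (exp (- t ^ 2) / sqrt PI - t * erfc t) <= 2).
      { apply Rle_trans with (exp (- 2 * t ^ 2) * (t + t * t)); auto.
        rewrite Rmult_assoc. apply Rmult_le_compat_l. lra. nra. }
      replace (exp (- 2 * y ^ 2) * exp (- (4 * - y) * t) * exp (- 2 * t ^ 2) * t * Rabs (exp (- t ^ 2) / sqrt PI - t * erfc t))
        with ((exp (- 2 * y ^ 2) * exp (- (4 * - y) * t)) * (exp (- 2 * t ^ 2) * t * Rabs (exp (- t ^ 2) / sqrt PI - t * erfc t))) by ring.
      replace (2 * exp (- 2 * y ^ 2) * exp (- (4 * - y) * t)) with ((exp (- 2 * y ^ 2) * exp (- (4 * - y) * t)) * 2) by ring.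
      apply Rmult_le_compat_l; lra. }
  assert (He := exp_pos (- 2 * y ^ 2)).
  assert (Hsq : 2 <= sqrt (2 * PI)) by (rewrite s2p; nra).
  rewrite Rabs_mult. rewrite Rabs_pos_eq.
  2:{ apply Rmult_le_pos. lra. left; apply Rinv_0_lt_compat; lra. }
  apply Rle_trans with (1 / sqrt (2 * PI) * (2 * exp (- 2 * y ^ 2) / (4 * - y))).
  apply Rmult_le_compat_l. apply Rmult_le_pos. lra. left; apply Rinv_0_lt_compat; lra. exact Hb.
  assert (1 / sqrt (2 * PI) <= 1).
  { unfold Rdiv. rewrite Rmult_1_l. rewrite <- Rinv_1. apply Rinv_le_contravar; lra. }
  assert (2 * exp (- 2 * y ^ 2) / (4 * - y) <= exp (- 2 * y ^ 2)).
  { apply (Rmult_le_reg_r (4 * - y)). lra. unfold Rdiv. rewrite Rmult_assoc, Rinv_l by lra. nra. }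
  assert (0 <= 2 * exp (- 2 * y ^ 2) / (4 * - y)).
  { apply Rmult_le_pos. lra. left; apply Rinv_0_lt_compat; lra. }
  nra.
Qed.

Definition Q (phi : R -> R) (a s : R) : R := RInt (fun u => phi (a + s * u)) 0 1.

Lemma comp_cont (phi : R -> R) (Hp : forall x, continuous phi x) a s u :
  continuous (fun w => phi (a + s * w)) u.
Proof.
  apply (continuous_comp (fun w => a + s * w) phi). apply cont_der. auto_derive. auto. apply Hp.
Qed.

Lemma Q_ident (phi : R -> R) (Hp : forall x, continuous phi x) a s :
  s * Q phi a s = RInt phi a (a + s).
Proof.
  unfold Q. rewrite <- RInt_scal_R.
  2:{ apply ex_RInt_cont. intros; apply comp_cont; auto. }
  assert (H := RInt_comp_lin_R phi s a 0 1).
  replace (s * 0 + a) with a in H by ring. replace (s * 1 + a) with (a + s) in H by ring.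
  rewrite <- H. 2:{ apply ex_RInt_cont. intros; apply Hp. }
  apply RInt_ext_R. intros x _. f_equal. f_equal. ring.
Qed.

Lemma Q_cont (phi : R -> R) (Hp : forall x, continuous phi x) a0 s0 :
  continuity_2d_pt (Q phi) a0 s0.
Proof.
  intros eps.
  set (m := Rabs a0 + Rabs s0 + 2).
  assert (He2 : 0 < eps / 2) by (assert (H := cond_pos eps); lra).
  destruct (unifcont_1d phi (- m) m (fun x _ => Hp x) (mkposreal _ He2)) as [d Hd].
  assert (Hd2 : 0 < Rmin 1 (d / 2)).
  { apply Rmin_pos. lra. assert (H := cond_pos d). lra. }
  exists (mkposreal _ Hd2). intros u v Hu Hv. simpl in Hu, Hv.
  assert (Hu1 : Rabs (u - a0) < 1) by (eapply Rlt_le_trans; [exact Hu | apply Rmin_l]).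
  assert (Hv1 : Rabs (v - s0) < 1) by (eapply Rlt_le_trans; [exact Hv | apply Rmin_l]).
  assert (Hu2 : Rabs (u - a0) < d / 2) by (eapply Rlt_le_trans; [exact Hu | apply Rmin_r]).
  assert (Hv2 : Rabs (v - s0) < d / 2) by (eapply Rlt_le_trans; [exact Hv | apply Rmin_r]).
  unfold Q. rewrite <- RInt_minus_R.
  2,3: apply ex_RInt_cont; intros; apply comp_cont; auto.
  apply Rle_lt_trans with (Rabs (1 - 0) * (eps / 2)).
  - apply abs_RInt_le_abs.
    + apply ex_RInt_cont. intros z _. apply (continuous_minus (fun w => phi (u + v * w)) (fun w => phi (a0 + s0 * w))); apply comp_cont; auto.
    + intros w Hw. rewrite Rmin_left in Hw by lra. rewrite Rmax_right in Hw by lra.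
      assert (Hin : forall p q, Rabs p <= Rabs a0 + 1 -> Rabs q <= Rabs s0 + 1 -> - m <= p + q * w <= m).
      { intros p q Hp1 Hq1. unfold m. apply Rabs_le_between.
        apply Rle_trans with (Rabs p + Rabs (q * w)). apply Rabs_triang.
        rewrite Rabs_mult. rewrite (Rabs_pos_eq w) by lra.
        assert (0 <= Rabs q) by apply Rabs_pos. nra. }
      assert (Hua : Rabs u <= Rabs a0 + 1).
      { replace u with (a0 + (u - a0)) by ring. eapply Rle_trans. apply Rabs_triang. lra. }
      assert (Hvs : Rabs v <= Rabs s0 + 1).
      { replace v with (s0 + (v - s0)) by ring. eapply Rle_trans. apply Rabs_triang. lra. }
      assert (Hball : ball (a0 + s0 * w) d (u + v * w)).
      { apply ball_R. replace (u + v * w - (a0 + s0 * w)) with ((u - a0) + (v - s0) * w) by ring.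
        eapply Rle_lt_trans. apply Rabs_triang. rewrite Rabs_mult. rewrite (Rabs_pos_eq w) by lra.
        assert (0 <= Rabs (v - s0)) by apply Rabs_pos. nra. }
      assert (HH := Hd (a0 + s0 * w) (u + v * w) (Hin a0 s0 ltac:(lra) ltac:(lra)) (Hin u v Hua Hvs) Hball).
      destruct (Rle_lt_dec (Rabs (phi (u + v * w) - phi (a0 + s0 * w))) (eps / 2)) as [|Hc]; auto.
      exfalso. apply HH. intro Hb. unfold ball in Hb; simpl in Hb.
      unfold AbsRing_ball, abs, minus, plus, opp in Hb; simpl in Hb. unfold Rminus in Hc. lra.
  - rewrite Rminus_0_r, Rabs_R1. assert (H := cond_pos eps). lra.
Qed.

Lemma cont2d_snd (k : R -> R -> R) x t : continuity_2d_pt k x t -> continuous (k x) t.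
Proof.
  intros H. apply filterlim_locally. intros eps.
  destruct (H eps) as [d Hd].
  exists d. intros v Hv. apply ball_R. apply Hd. rewrite Rminus_eq_0, Rabs_R0. apply cond_pos.
  unfold ball in Hv; simpl in Hv. unfold AbsRing_ball, abs, minus, plus, opp in Hv; simpl in Hv. exact Hv.
Qed.

Lemma Fcont (k : R -> R -> R) (Hk : forall x t, continuity_2d_pt k x t) c :
  continuous (fun x => RInt (k x) 0 x) c.
Proof.
  assert (Hex : forall x a b, ex_RInt (k x) a b).
  { intros x a b. apply ex_RInt_cont. intros z _. apply cont2d_snd. apply Hk. }
  set (m := Rabs c + 1).
  destruct (bounded_continuity (k c) (- m) m) as [M HM].
  { intros x _. apply (cont2d_snd k c x (Hk c x)). }
  apply filterlim_locally. intros [eps Heps]. simpl.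
  set (e1 := eps / (2 * (Rabs c + 1))).
  assert (He1 : 0 < e1) by (unfold e1; apply Rdiv_lt_0_compat; [lra|]; assert (0 <= Rabs c) by apply Rabs_pos; lra).
  destruct (uniform_continuity_2d k (c - 1) (c + 1) (- m) m (fun x y _ _ => Hk x y) (mkposreal _ He1)) as [d Hd].
  assert (HM0 : 0 <= M).
  { assert (H := HM c). unfold m in H. assert (Hc : - (Rabs c + 1) <= c <= Rabs c + 1).
    { split. assert (H1 := Rabs_pos c). assert (- c <= Rabs c). { rewrite <- Rabs_Ropp. apply RRle_abs. } lra.
      assert (c <= Rabs c) by apply RRle_abs. lra. }
    specialize (H Hc). unfold norm in H; simpl in H. unfold abs in H; simpl in H.
    assert (0 <= Rabs (k c c)) by apply Rabs_pos. lra. }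
  set (r := Rmin (Rmin 1 d) (eps / (2 * (M + e1 + 1)))).
  assert (Hr : 0 < r).
  { unfold r. apply Rmin_pos. apply Rmin_pos. lra. apply cond_pos. apply Rdiv_lt_0_compat; lra. }
  exists (mkposreal _ Hr). intros x Hx. apply ball_R.
  unfold ball in Hx; simpl in Hx. unfold AbsRing_ball, abs, minus, plus, opp in Hx; simpl in Hx.
  fold (x - c) in Hx.
  assert (Hx1 : Rabs (x - c) < 1) by (eapply Rlt_le_trans; [exact Hx|]; unfold r; eapply Rle_trans; apply Rmin_l).
  assert (Hxd : Rabs (x - c) < d) by (eapply Rlt_le_trans; [exact Hx|]; unfold r; eapply Rle_trans; [apply Rmin_l|apply Rmin_r]).
  assert (Hxe : Rabs (x - c) < eps / (2 * (M + e1 + 1))) by (eapply Rlt_le_trans; [exact Hx|]; unfold r; apply Rmin_r).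
  assert (Hxc : c - 1 <= x <= c + 1) by (apply Rabs_le_between'; lra) .
  assert (Hcc : c - 1 <= c <= c + 1) by lra.
  assert (Hcm : forall t, Rmin 0 c <= t <= Rmax 0 c -> - m <= t <= m).
  { intros t Ht. unfold m. destruct (Rle_lt_dec 0 c).
    rewrite Rmin_left, Rmax_right in Ht by lra. rewrite Rabs_pos_eq by lra. lra.
    rewrite Rmin_right, Rmax_left in Ht by lra. rewrite Rabs_left by lra. lra. }
  assert (Hxm : forall t, Rmin c x <= t <= Rmax c x -> - m <= t <= m).
  { intros t Ht. unfold m. assert (Hxc' := Hxc).
    assert (H1 : Rmin c x >= c - 1) by (unfold Rmin; destruct (Rle_dec c x); lra).
    assert (H2 : Rmax c x <= c + 1) by (unfold Rmax; destruct (Rle_dec c x); lra).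
    assert (c <= Rabs c) by apply RRle_abs.
    assert (- c <= Rabs c) by (rewrite <- Rabs_Ropp; apply RRle_abs). lra. }
  assert (Hclose : forall t, - m <= t <= m -> Rabs (k x t - k c t) < e1).
  { intros t Ht. apply (Hd c t x t Hcc Ht Hxc Ht). lra. rewrite Rminus_eq_0, Rabs_R0. apply cond_pos. }
  rewrite <- (RInt_Chasles_R (k x) 0 c x) by apply Hex.
  replace (RInt (k x) 0 c + RInt (k x) c x - RInt (k c) 0 c)
    with ((RInt (k x) 0 c - RInt (k c) 0 c) + RInt (k x) c x) by ring.
  rewrite <- RInt_minus_R by apply Hex.
  assert (HA : Rabs (RInt (fun t => k x t - k c t) 0 c) <= Rabs (c - 0) * e1).
  { apply abs_RInt_le_abs.
    - apply ex_RInt_cont. intros z _. apply (continuous_minus (k x) (k c)); apply cont2d_snd; apply Hk.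
    - intros t Ht. left. apply Hclose. apply Hcm. exact Ht. }
  assert (HB : Rabs (RInt (k x) c x) <= Rabs (x - c) * (M + e1)).
  { apply abs_RInt_le_abs. apply Hex.
    intros t Ht. specialize (Hxm t Ht). assert (H1 := Hclose t Hxm). assert (H2 := HM t Hxm).
    unfold norm in H2; simpl in H2. unfold abs in H2; simpl in H2.
    replace (k x t) with (k c t + (k x t - k c t)) by ring.
    eapply Rle_trans. apply Rabs_triang. lra. }
  eapply Rle_lt_trans. apply Rabs_triang.
  assert (HA' : Rabs (c - 0) * e1 = eps / 2 * (Rabs c / (Rabs c + 1))).
  { unfold e1. rewrite Rminus_0_r. field. assert (0 <= Rabs c) by apply Rabs_pos. lra. }
  assert (Rabs c / (Rabs c + 1) < 1).
  { assert (0 <= Rabs c) by apply Rabs_pos. apply (Rmult_lt_reg_r (Rabs c + 1)). lra.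
    unfold Rdiv; rewrite Rmult_assoc, Rinv_l by lra. lra. }
  assert (HB' : Rabs (x - c) * (M + e1) <= eps / 2).
  { apply Rle_trans with (eps / (2 * (M + e1 + 1)) * (M + e1)).
    apply Rmult_le_compat_r. lra. left; exact Hxe.
    apply (Rmult_le_reg_r (2 * (M + e1 + 1))). lra.
    replace (eps / (2 * (M + e1 + 1)) * (M + e1) * (2 * (M + e1 + 1))) with (eps * (M + e1)) by (field; lra).
    nra. }
  assert (eps / 2 * (Rabs c / (Rabs c + 1)) < eps / 2) by nra. lra.
Qed.

Definition Ef (y t : R) : R := exp (- 2 * (t - y) ^ 2).
Definition dEf (y t : R) : R := - 4 * (t - y) * exp (- 2 * (t - y) ^ 2).
Definition Phif (y t : R) : R := erf (sqrt 2 * (t - y)).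

Definition kk (y t1 t2 : R) : R :=
  2 / sqrt PI * Q gam 0 (t1 - t2) * (Ef y t1 + Ef y t2)
  - Ef y t1 * (2 / sqrt PI) * sqrt 2 * Q gam (sqrt 2 * (t2 - y)) (sqrt 2 * (t1 - t2))
  + Phif y t1 * Q (dEf y) t2 (t1 - t2).

Lemma Ef_derive y t : is_derive (Ef y) t (dEf y t).
Proof. unfold Ef, dEf. auto_derive. auto. simpl; req. unfold Rminus; ring. Qed.

Lemma dEf_cont y t : continuous (dEf y) t.
Proof. apply cont_der. unfold dEf. auto_derive. auto. Qed.

Lemma Ef_diff y a b : Ef y b - Ef y a = RInt (dEf y) a b.
Proof.
  assert (H : is_RInt (dEf y) a b (minus (Ef y b) (Ef y a))).
  { apply (@is_RInt_derive R_CompleteNormedModule (Ef y)).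
    - intros; apply Ef_derive.
    - intros; apply dEf_cont. }
  rewrite (is_RInt_unique _ _ _ _ H). unfold minus, plus, opp; simpl. ring.
Qed.

Lemma kk_eq y t1 t2 : t2 <> t1 -> A4_integrand y t1 t2 = kk y t1 t2.
Proof.
  intros Hne. unfold A4_integrand, kk. set (s := t1 - t2). assert (Hs : s <> 0) by (unfold s; lra).
  assert (E1 : s * Q gam 0 s = gi s).
  { rewrite Q_ident by apply gam_cont. unfold gi. f_equal. ring. }
  assert (E2 : (sqrt 2 * s) * Q gam (sqrt 2 * (t2 - y)) (sqrt 2 * s) = gi (sqrt 2 * (t1 - y)) - gi (sqrt 2 * (t2 - y))).
  { rewrite Q_ident by apply gam_cont. rewrite gi_diff. f_equal. unfold s. ring. }
  assert (E3 : s * Q (dEf y) t2 s = Ef y t1 - Ef y t2).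
  { rewrite Q_ident by apply dEf_cont. rewrite Ef_diff. f_equal. unfold s. ring. }
  fold (Ef y t1) (Ef y t2).
  change (erf (sqrt 2 * (t2 - y))) with (Phif y t2).
  change (erf (sqrt 2 * (t1 - y))) with (Phif y t1).
  unfold Phif. rewrite !erf_gi.
  rewrite <- E1.
  apply (Rmult_eq_reg_l s); auto.
  rewrite <- Rmult_assoc, Rinv_r, Rmult_1_l by exact Hs.
  transitivity (2 / sqrt PI * (s * Q gam 0 s) * (Ef y t1 + Ef y t2) -
    Ef y t1 * (2 / sqrt PI) * ((sqrt 2 * s) * Q gam (sqrt 2 * (t2 - y)) (sqrt 2 * s)) +
    2 / sqrt PI * gi (sqrt 2 * (t1 - y)) * (s * Q (dEf y) t2 s)).
  - rewrite E2, E3. ring.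
  - ring.
Qed.

Lemma c2_comp (g f1 f2 : R -> R -> R) x y :
  continuity_2d_pt f1 x y -> continuity_2d_pt f2 x y -> continuity_2d_pt g (f1 x y) (f2 x y) ->
  continuity_2d_pt (fun u v => g (f1 u v) (f2 u v)) x y.
Proof.
  rewrite !continuity_2d_pt_filterlim. intros H1 H2 H3.
  apply (continuous_comp_2 (fun z : R * R => f1 (fst z) (snd z)) (fun z : R * R => f2 (fst z) (snd z)) g (x, y)); auto.
Qed.

Lemma c1_comp (g : R -> R) (f : R -> R -> R) x y :
  continuity_2d_pt f x y -> continuous g (f x y) -> continuity_2d_pt (fun u v => g (f u v)) x y.
Proof.
  intros H1 H2. apply continuity_1d_2d_pt_comp; auto. apply continuity_pt_filterlim. exact H2.
Qed.

Lemma c2_lin (a b c : R) x y : continuity_2d_pt (fun u v => a * u + b * v + c) x y.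
Proof.
  apply continuity_2d_pt_plus. apply continuity_2d_pt_plus.
  apply continuity_2d_pt_mult. apply continuity_2d_pt_const. apply continuity_2d_pt_id1.
  apply continuity_2d_pt_mult. apply continuity_2d_pt_const. apply continuity_2d_pt_id2.
  apply continuity_2d_pt_const.
Qed.

Lemma kk_cont y x t : continuity_2d_pt (kk y) x t.
Proof.
  unfold kk.
  assert (HE1 : continuity_2d_pt (fun u v => Ef y u) x t).
  { apply (c1_comp (Ef y) (fun u v => u)). apply continuity_2d_pt_id1. apply cont_der. unfold Ef. auto_derive. auto. }
  assert (HE2 : continuity_2d_pt (fun u v => Ef y v) x t).
  { apply (c1_comp (Ef y) (fun u v => v)). apply continuity_2d_pt_id2. apply cont_der. unfold Ef. auto_derive. auto. }
  assert (HQ1 : continuity_2d_pt (fun u v => Q gam 0 (u - v)) x t).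
  { apply (c2_comp (Q gam) (fun u v => 0) (fun u v => u - v)). apply continuity_2d_pt_const.
    apply continuity_2d_pt_ext with (fun u v => 1 * u + (-1) * v + 0). intros; ring. apply c2_lin.
    apply Q_cont. apply gam_cont. }
  assert (HQ2 : continuity_2d_pt (fun u v => Q gam (sqrt 2 * (v - y)) (sqrt 2 * (u - v))) x t).
  { apply (c2_comp (Q gam) (fun u v => sqrt 2 * (v - y)) (fun u v => sqrt 2 * (u - v))).
    apply continuity_2d_pt_ext with (fun u v => 0 * u + sqrt 2 * v + (- (sqrt 2 * y))). intros; ring. apply c2_lin.
    apply continuity_2d_pt_ext with (fun u v => sqrt 2 * u + (- sqrt 2) * v + 0). intros; ring. apply c2_lin.
    apply Q_cont. apply gam_cont. }
  assert (HQ3 : continuity_2d_pt (fun u v => Q (dEf y) v (u - v)) x t).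
  { apply (c2_comp (Q (dEf y)) (fun u v => v) (fun u v => u - v)). apply continuity_2d_pt_id2.
    apply continuity_2d_pt_ext with (fun u v => 1 * u + (-1) * v + 0). intros; ring. apply c2_lin.
    apply Q_cont. apply dEf_cont. }
  assert (HP : continuity_2d_pt (fun u v => Phif y u) x t).
  { apply (c1_comp (Phif y) (fun u v => u)). apply continuity_2d_pt_id1. apply cont_der. unfold Phif, erf.
    fold (gi (sqrt 2 * (x - y))). auto_derive. gi_side. }
  apply continuity_2d_pt_plus. apply continuity_2d_pt_minus.
  - apply continuity_2d_pt_mult. apply continuity_2d_pt_mult. apply continuity_2d_pt_const. exact HQ1.
    apply continuity_2d_pt_plus; auto.
  - apply continuity_2d_pt_mult. apply continuity_2d_pt_mult. apply continuity_2d_pt_mult. exact HE1.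
    apply continuity_2d_pt_const. apply continuity_2d_pt_const. exact HQ2.
  - apply continuity_2d_pt_mult; auto.
Qed.

Lemma exp_mono a b : a <= b -> exp a <= exp b.
Proof. intros H. destruct (Req_dec a b). subst; lra. left; apply exp_increasing; lra. Qed.

Lemma Ef_bound y t : y <= -1 -> 0 <= t -> 0 < Ef y t <= exp (- 2 * y ^ 2) * exp (- (4 * - y) * t).
Proof.
  intros Hy Ht. unfold Ef. split. apply exp_pos. rewrite exp_split.
  assert (exp (- 2 * t ^ 2) <= 1) by (apply exp_le_1; nra).
  assert (0 < exp (- 2 * y ^ 2) * exp (- (4 * - y) * t)) by (apply Rmult_lt_0_compat; apply exp_pos).
  assert (0 < exp (- 2 * t ^ 2)) by apply exp_pos. nra.
Qed.

Lemma dEf_bound y v : y <= -1 -> 0 <= v ->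
  Rabs (dEf y v) <= 8 * (- y) * (exp (- 2 * y ^ 2) * exp (- (4 * - y) * v)).
Proof.
  intros Hy Hv. unfold dEf. rewrite exp_split.
  set (B := exp (- 2 * y ^ 2) * exp (- (4 * - y) * v)).
  assert (HB : 0 < B) by (unfold B; apply Rmult_lt_0_compat; apply exp_pos).
  assert (H1 := exp_ineq1_le (2 * v ^ 2)).
  assert (E : exp (- 2 * v ^ 2) * exp (2 * v ^ 2) = 1).
  { rewrite <- exp_plus. replace (- 2 * v ^ 2 + 2 * v ^ 2) with 0 by ring. apply exp_0. }
  assert (Hp := exp_pos (2 * v ^ 2)). assert (Hq := exp_pos (- 2 * v ^ 2)).
  assert (Hve : v * exp (- 2 * v ^ 2) <= 1).
  { assert (v <= exp (2 * v ^ 2)) by nra. nra. }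
  assert (Hq1 : exp (- 2 * v ^ 2) <= 1) by (apply exp_le_1; nra).
  replace (- 4 * (v - y) * (B * exp (- 2 * v ^ 2))) with (- (4 * B * ((v + - y) * exp (- 2 * v ^ 2)))) by ring.
  rewrite Rabs_Ropp. rewrite Rabs_pos_eq.
  2:{ apply Rmult_le_pos. lra. apply Rmult_le_pos. lra. lra. }
  assert ((v + - y) * exp (- 2 * v ^ 2) <= 2 * - y) by nra.
  nra.
Qed.

Lemma Q_bound (phi : R -> R) (Hp : forall x, continuous phi x) a s M :
  (forall u, 0 <= u <= 1 -> Rabs (phi (a + s * u)) <= M) -> Rabs (Q phi a s) <= M.
Proof.
  intros H. unfold Q. replace M with (Rabs (1 - 0) * M) by (rewrite Rminus_0_r, Rabs_R1; ring).
  apply abs_RInt_le_abs. apply ex_RInt_cont. intros; apply comp_cont; auto.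
  intros x Hx. rewrite Rmin_left, Rmax_right in Hx by lra. apply H; lra.
Qed.

Lemma gam_abs x : Rabs (gam x) <= 1.
Proof. unfold gam. rewrite Rabs_pos_eq by (left; apply exp_pos). apply exp_le_1. nra. Qed.

Lemma gi_abs x : Rabs (gi x) <= sqrt PI / 2.
Proof.
  apply Rabs_le. split.
  - assert (H := gi_le (- x)). rewrite gi_odd in H. lra.
  - apply gi_le.
Qed.

Lemma erf_abs z : Rabs (erf z) <= 1.
Proof.
  rewrite erf_gi. destruct sp_facts as [Hsp _].
  rewrite Rabs_mult. rewrite (Rabs_pos_eq (2 / sqrt PI)).
  2:{ apply Rmult_le_pos. lra. left; apply Rinv_0_lt_compat; lra. }
  assert (H := gi_abs z).
  apply Rle_trans with (2 / sqrt PI * (sqrt PI / 2)).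
  apply Rmult_le_compat_l. apply Rmult_le_pos. lra. left; apply Rinv_0_lt_compat; lra. exact H.
  right. field. lra.
Qed.

Lemma consts : 2 / sqrt PI <= 1.18 /\ sqrt 2 <= 1.5 /\ 0 < 2 / sqrt PI /\ 0 < sqrt 2.
Proof.
  destruct sp_facts as [Hsp _]. destruct s2_facts as [Hs2 Hs2s].
  split. apply (Rmult_le_reg_r (sqrt PI)). lra. unfold Rdiv. rewrite Rmult_assoc, Rinv_l by lra. lra.
  split. nra. split. apply Rdiv_lt_0_compat; lra. lra.
Qed.

Lemma prod3 a b c A B C : 0 <= a <= A -> 0 <= b <= B -> 0 <= c <= C -> a * b * c <= A * B * C.
Proof.
  intros. apply Rmult_le_compat.
  - apply Rmult_le_pos; lra.
  - lra.
  - apply Rmult_le_compat; lra.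
  - lra.
Qed.

Lemma prod4 a b c d A B C D : 0 <= a <= A -> 0 <= b <= B -> 0 <= c <= C -> 0 <= d <= D -> a * b * c * d <= A * B * C * D.
Proof.
  intros. apply Rmult_le_compat.
  - apply Rmult_le_pos. apply Rmult_le_pos; lra. lra.
  - lra.
  - apply prod3; lra.
  - lra.
Qed.

Lemma kk_bound_a y t1 t2 : y <= -1 -> 0 <= t2 <= t1 ->
  Rabs (kk y t1 t2) <= 13 * (- y) * (exp (- 2 * y ^ 2) * exp (- (4 * - y) * t2)).
Proof.
  intros Hy [H2 H12]. destruct consts as [Hc1 [Hc2 [Hc3 Hc4]]].
  set (B := exp (- 2 * y ^ 2) * exp (- (4 * - y) * t2)).
  assert (HB : 0 < B) by (unfold B; apply Rmult_lt_0_compat; apply exp_pos).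
  assert (HE1 : 0 < Ef y t1 <= B).
  { destruct (Ef_bound y t1 Hy ltac:(lra)). split; auto. eapply Rle_trans. exact H0.
    unfold B. apply Rmult_le_compat_l. left; apply exp_pos. apply exp_mono. nra. }
  assert (HE2 : 0 < Ef y t2 <= B) by (apply Ef_bound; lra).
  assert (HQ1 : Rabs (Q gam 0 (t1 - t2)) <= 1) by (apply Q_bound; [apply gam_cont | intros; apply gam_abs]).
  assert (HQ2 : Rabs (Q gam (sqrt 2 * (t2 - y)) (sqrt 2 * (t1 - t2))) <= 1) by (apply Q_bound; [apply gam_cont | intros; apply gam_abs]).
  assert (HQ3 : Rabs (Q (dEf y) t2 (t1 - t2)) <= 8 * (- y) * B).
  { apply Q_bound. apply dEf_cont. intros u Hu.
    eapply Rle_trans. apply dEf_bound; auto. nra.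
    apply Rmult_le_compat_l. lra. unfold B. apply Rmult_le_compat_l. left; apply exp_pos. apply exp_mono. assert (0 <= (t1 - t2) * u) by nra. nra. }
  assert (HP : Rabs (Phif y t1) <= 1) by apply erf_abs.
  unfold kk.
  set (q1 := Q gam 0 (t1 - t2)) in *. set (q2 := Q gam (sqrt 2 * (t2 - y)) (sqrt 2 * (t1 - t2))) in *.
  set (q3 := Q (dEf y) t2 (t1 - t2)) in *. set (p := Phif y t1) in *.
  set (e1 := Ef y t1) in *. set (e2 := Ef y t2) in *. set (c := 2 / sqrt PI) in *.
  assert (Ha : Rabs (c * q1 * (e1 + e2)) <= 1.18 * 2 * B).
  { rewrite !Rabs_mult. rewrite (Rabs_pos_eq c) by lra. rewrite (Rabs_pos_eq (e1 + e2)) by lra.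
    assert (0 <= Rabs q1) by apply Rabs_pos. replace (1.18 * 2 * B) with (1.18 * 1 * (2 * B)) by ring. apply prod3; lra. }
  assert (Hb : Rabs (e1 * c * sqrt 2 * q2) <= 1.18 * 1.5 * B).
  { rewrite !Rabs_mult. rewrite (Rabs_pos_eq c) by lra. rewrite (Rabs_pos_eq e1) by lra.
    rewrite (Rabs_pos_eq (sqrt 2)) by lra.
    assert (0 <= Rabs q2) by apply Rabs_pos.
    replace (1.18 * 1.5 * B) with (B * 1.18 * 1.5 * 1) by ring. apply prod4; lra. }
  assert (Hc : Rabs (p * q3) <= 8 * - y * B).
  { rewrite Rabs_mult. assert (0 <= Rabs p) by apply Rabs_pos. assert (0 <= Rabs q3) by apply Rabs_pos. nra. }
  eapply Rle_trans. apply Rabs_triang.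
  eapply Rle_trans. apply Rplus_le_compat_r. apply Rabs_triang.
  rewrite Rabs_Ropp. nra.
Qed.

Lemma kk_bound_b y t1 t2 : y <= -1 -> 0 <= t2 -> 1 <= t1 - t2 ->
  Rabs (kk y t1 t2) <= 4 * (exp (- 2 * y ^ 2) * exp (- (4 * - y) * t2)) * exp (- (t1 - t2)).
Proof.
  intros Hy H2 Hs. destruct consts as [Hc1 [Hc2 [Hc3 Hc4]]].
  rewrite <- kk_eq by lra. unfold A4_integrand.
  set (B := exp (- 2 * y ^ 2) * exp (- (4 * - y) * t2)).
  assert (HB : 0 < B) by (unfold B; apply Rmult_lt_0_compat; apply exp_pos).
  set (s := t1 - t2).
  assert (Hes : 0 < exp (- s)) by apply exp_pos.
  assert (HE1 : 0 < Ef y t1 <= B * exp (- s)).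
  { destruct (Ef_bound y t1 Hy ltac:(lra)). split; auto. eapply Rle_trans. exact H0.
    replace (exp (- 2 * y ^ 2) * exp (- (4 * - y) * t1)) with (B * exp (- (4 * - y) * s)).
    2:{ unfold B, s. rewrite Rmult_assoc, <- exp_plus. f_equal. f_equal. ring. }
    apply Rmult_le_compat_l. lra. apply exp_mono. unfold s. nra. }
  assert (HE2 : 0 < Ef y t2 <= B) by (apply Ef_bound; lra).
  assert (Hd1 : Rabs (erf s + erf (sqrt 2 * (t2 - y))) <= 2).
  { eapply Rle_trans. apply Rabs_triang. assert (H1 := erf_abs s). assert (H3 := erf_abs (sqrt 2 * (t2 - y))). lra. }
  assert (Hd2 : Rabs (erf s - erf (sqrt 2 * (t1 - y))) <= 1.18 * exp (- s)).
  { rewrite !erf_gi. replace (2 / sqrt PI * gi s - 2 / sqrt PI * gi (sqrt 2 * (t1 - y))) with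
      (- (2 / sqrt PI * (gi (sqrt 2 * (t1 - y)) - gi s))) by ring.
    rewrite Rabs_Ropp, Rabs_mult, (Rabs_pos_eq (2 / sqrt PI)) by lra.
    destruct s2_facts as [Hs2 _].
    assert (HT := gi_tail s (sqrt 2 * (t1 - y)) ltac:(unfold s; split; nra)).
    rewrite Rabs_pos_eq by lra. apply Rmult_le_compat; lra. }
  fold s.
  assert (Hinv : 0 < / s <= 1).
  { unfold s. split. apply Rinv_0_lt_compat; lra. rewrite <- Rinv_1. apply Rinv_le_contravar; lra. }
  rewrite Rabs_mult, Rabs_pos_eq by lra.
  set (N := Ef y t1 * (erf s + erf (sqrt 2 * (t2 - y))) + Ef y t2 * (erf s - erf (sqrt 2 * (t1 - y)))).
  assert (HN : Rabs N <= 4 * B * exp (- s)).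
  { unfold N. eapply Rle_trans. apply Rabs_triang. rewrite !Rabs_mult.
    rewrite (Rabs_pos_eq (Ef y t1)) by lra. rewrite (Rabs_pos_eq (Ef y t2)) by lra.
    assert (0 <= Rabs (erf s + erf (sqrt 2 * (t2 - y)))) by apply Rabs_pos.
    assert (0 <= Rabs (erf s - erf (sqrt 2 * (t1 - y)))) by apply Rabs_pos.
    assert (Ef y t1 * Rabs (erf s + erf (sqrt 2 * (t2 - y))) <= B * exp (- s) * 2) by (apply Rmult_le_compat; lra).
    assert (Ef y t2 * Rabs (erf s - erf (sqrt 2 * (t1 - y))) <= B * (1.18 * exp (- s))) by (apply Rmult_le_compat; lra).
    nra. }
  assert (0 <= Rabs N) by apply Rabs_pos.
  assert (/ s * Rabs N <= Rabs N). { rewrite <- (Rmult_1_l (Rabs N)) at 2. apply Rmult_le_compat_r; lra. } change (/ s * Rabs N <= 4 * B * exp (- s)). lra.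
Qed.

Lemma kk_bound y t1 t2 : y <= -1 -> 0 <= t2 <= t1 ->
  Rabs (kk y t1 t2) <= 60 * (- y) * exp (- 2 * y ^ 2) * exp (- t1) * exp (- (4 * - y - 1) * t2).
Proof.
  intros Hy Ht.
  set (B := exp (- 2 * y ^ 2) * exp (- (4 * - y) * t2)).
  assert (HB : 0 < B) by (unfold B; apply Rmult_lt_0_compat; apply exp_pos).
  assert (E : exp (- 2 * y ^ 2) * exp (- t1) * exp (- (4 * - y - 1) * t2) = B * exp (- (t1 - t2))).
  { unfold B. rewrite <- !exp_plus. f_equal. ring. }
  replace (60 * - y * exp (- 2 * y ^ 2) * exp (- t1) * exp (- (4 * - y - 1) * t2))
    with (60 * - y * (exp (- 2 * y ^ 2) * exp (- t1) * exp (- (4 * - y - 1) * t2))) by ring.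
  rewrite E.
  assert (Hes : 0 < exp (- (t1 - t2))) by apply exp_pos.
  destruct (Rle_lt_dec 1 (t1 - t2)).
  - eapply Rle_trans. apply kk_bound_b; lra. fold B.
    assert (0 < B * exp (- (t1 - t2))) by (apply Rmult_lt_0_compat; auto). nra.
  - eapply Rle_trans. apply kk_bound_a; lra. fold B.
    assert (exp (- (1)) <= exp (- (t1 - t2))) by (apply exp_mono; lra).
    assert (/ 3 <= exp (- (1))).
    { rewrite exp_Ropp. apply Rinv_le_contravar. apply exp_pos. apply exp_le_3. }
    assert (0 < - y) by lra. assert (HyB : 0 < - y * B) by nra.
    assert (H3 : (- y * B) * (/ 3) <= (- y * B) * exp (- (t1 - t2))) by (apply Rmult_le_compat_l; lra).
    replace (60 * - y * (B * exp (- (t1 - t2)))) with (60 * ((- y * B) * exp (- (t1 - t2)))) by ring.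
    replace (13 * - y * B) with (13 * (- y * B)) by ring. lra.
Qed.

Definition Fk (y t1 : R) : R := RInt (kk y t1) 0 t1.

Lemma Fk_eq y t1 : RInt (fun t2 => A4_integrand y t1 t2) 0 t1 = Fk y t1.
Proof.
  unfold Fk. apply RInt_ext_R. intros x Hx. apply kk_eq.
  intro; subst. destruct (Rle_lt_dec 0 t1).
  rewrite Rmax_right in Hx by lra. lra. rewrite Rmin_right in Hx by lra. lra.
Qed.

Lemma Fk_bound y t1 : y <= -1 -> 0 <= t1 ->
  Rabs (Fk y t1) <= 20 * exp (- 2 * y ^ 2) * exp (- (1) * t1).
Proof.
  intros Hy Ht. unfold Fk.
  assert (H := bound_ab (kk y t1) (60 * (- y) * exp (- 2 * y ^ 2) * exp (- t1)) (4 * - y - 1) 0 t1 Ht ltac:(lra)).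
  eapply Rle_trans. apply H.
  - apply ex_RInt_cont. intros z _. apply cont2d_snd. apply kk_cont.
  - intros t Hti. apply kk_bound; lra.
  - replace (- (4 * - y - 1) * 0) with 0 by ring. rewrite exp_0, Rmult_1_r.
    replace (- (1) * t1) with (- t1) by ring.
    assert (0 < exp (- 2 * y ^ 2) * exp (- t1)) by (apply Rmult_lt_0_compat; apply exp_pos).
    apply (Rmult_le_reg_r (4 * - y - 1)). lra.
    replace (60 * - y * exp (- 2 * y ^ 2) * exp (- t1) / (4 * - y - 1) * (4 * - y - 1))
      with (60 * - y * (exp (- 2 * y ^ 2) * exp (- t1))) by (field; lra).
    nra.
Qed.

Lemma A4_bound y : y <= -1 -> Rabs (A4 y) <= 10 * exp (- 2 * y ^ 2).
Proof.
  intros Hy. unfold A4.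
  assert (H := bound_inf (fun t1 => RInt (fun t2 => A4_integrand y t1 t2) 0 t1) (20 * exp (- 2 * y ^ 2)) 1 Rlt_0_1).
  assert (Hb : Rabs (int0inf (fun t1 => RInt (fun t2 => A4_integrand y t1 t2) 0 t1)) <= 20 * exp (- 2 * y ^ 2) / 1).
  { apply H.
    - intros t _. apply (continuous_ext (fun x => RInt (kk y x) 0 x)).
      intros x. symmetry. apply Fk_eq.
      apply Fcont. intros; apply kk_cont.
    - intros t Ht. rewrite Fk_eq. apply Fk_bound; auto. }
  destruct s2_facts as [Hs2 _]. destruct sp_facts as [Hsp _].
  assert (Hsq : 2 <= sqrt (2 * PI)) by (rewrite s2p; nra).
  assert (He := exp_pos (- 2 * y ^ 2)).
  rewrite Rabs_mult, Rabs_Ropp, Rabs_pos_eq.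
  2:{ apply Rmult_le_pos. lra. left; apply Rinv_0_lt_compat; lra. }
  apply Rle_trans with (1 / sqrt (2 * PI) * (20 * exp (- 2 * y ^ 2) / 1)).
  apply Rmult_le_compat_l. apply Rmult_le_pos. lra. left; apply Rinv_0_lt_compat; lra. exact Hb.
  assert (1 / sqrt (2 * PI) <= / 2).
  { unfold Rdiv. rewrite Rmult_1_l. apply Rinv_le_contravar; lra. }
  unfold Rdiv at 2. rewrite Rinv_1, Rmult_1_r. nra.
Qed.

Lemma main_bound y : y <= -1 -> Rabs (A y / Dn y - 1) <= 74 / (- y).
Proof.
  intros Hy.
  assert (H3 := A3_ratio y Hy). assert (H1 := A1_bound y Hy). assert (H2 := A2_bound y Hy).
  assert (H4 := A4_bound y Hy).
  destruct s2_facts as [Hs2 Hs2s]. destruct sp_facts as [Hsp Hsps].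
  assert (HPI := PI_4).
  assert (Hsp2 : sqrt PI <= 2) by nra.
  assert (Hs22 : sqrt 2 <= 1.5) by nra.
  assert (Hsq : sqrt (2 * PI) <= 3) by (rewrite s2p; nra).
  assert (Hsq0 : 0 < sqrt (2 * PI)) by (rewrite s2p; nra).
  set (e := exp (- 2 * y ^ 2)) in *. assert (He : 0 < e) by apply exp_pos.
  assert (HD : Dn y = - y * e / (2 * sqrt (2 * PI))).
  { unfold Dn. fold e. rewrite Rabs_left by lra. reflexivity. }
  assert (HDp : 0 < Dn y) by (rewrite HD; apply Rdiv_lt_0_compat; nra).
  assert (E : A y / Dn y - 1 = (A3 y / Dn y - 1) + (Defs.A1 y + A2 y + A4 y) / Dn y).
  { unfold A. field. lra. }
  rewrite E. eapply Rle_trans. apply Rabs_triang.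
  assert (Hr : Rabs ((Defs.A1 y + A2 y + A4 y) / Dn y) <= 72 / (- y)).
  { unfold Rdiv at 1. rewrite Rabs_mult, (Rabs_pos_eq (/ Dn y)) by (left; apply Rinv_0_lt_compat; lra).
    assert (Hs : Rabs (Defs.A1 y + A2 y + A4 y) <= 12 * e).
    { eapply Rle_trans. apply Rabs_triang. eapply Rle_trans. apply Rplus_le_compat_r. apply Rabs_triang. lra. }
    rewrite HD. replace (/ (- y * e / (2 * sqrt (2 * PI)))) with (2 * sqrt (2 * PI) / (- y * e)) by (field; repeat split; lra).
    apply Rle_trans with (12 * e * (2 * sqrt (2 * PI) / (- y * e))).
    apply Rmult_le_compat_r. apply Rdiv_le_0_compat. lra. nra. exact Hs.
    replace (12 * e * (2 * sqrt (2 * PI) / (- y * e))) with (24 * sqrt (2 * PI) / (- y)) by (field; lra).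
    apply (Rmult_le_reg_r (- y)). lra. unfold Rdiv. rewrite !Rmult_assoc, Rinv_l by lra. lra. }
  replace (74 / - y) with (2 / - y + 72 / - y) by (field; lra). lra.
Qed.

Theorem lemma9 :
  is_lim (fun y => A y / (Rabs y * exp (- 2 * y ^ 2) / (2 * sqrt (2 * PI))))
         m_infty 1.
Proof.
  unfold is_lim. apply filterlim_locally. intros eps.
  assert (He := cond_pos eps).
  exists (Rmin (-1) (- (74 / eps)) - 1). intros y Hy.
  assert (Hy1 : y <= -1) by (assert (H := Rmin_l (-1) (- (74 / eps))); lra).
  assert (Hy2 : y < - (74 / eps)) by (assert (H := Rmin_r (-1) (- (74 / eps))); lra).
  apply ball_R. fold (Dn y).
  eapply Rle_lt_trans. apply main_bound; auto.
  apply (Rmult_lt_reg_r (- y)). lra. unfold Rdiv. rewrite Rmult_assoc, Rinv_l by lra.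
  apply (Rmult_lt_reg_r (/ eps)). apply Rinv_0_lt_compat; lra.
  replace (eps * - y * / eps) with (- y) by (field; lra). unfold Rdiv in Hy2. lra.
Qed.
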